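(* Let $k\ge 2$ and let $x_1, x_2, \ldots, x_{c}$ be the Nyldon factorization of $\mathit{TM}_{2k-1}$ (so $c$ is its number of factors). Then the Nyldon factorization of $\mathit{TM}_{2k}$ is $$x_1,\ \ldots,\ x_{c-1},\ x_{c}\cdot\overline{\mathit{TM}_{2k-2}}',\ b\cdot \mathit{TM}_{2k-2},$$ and the Nyldon factorization of $\mathit{TM}_{2k+1}$ is $$x_1,\ \ldots,\ x_{c-1},\ x_{c}\cdot\overline{\mathit{TM}_{2k-2}}',\ b\cdot \mathit{TM}_{2k-2}\cdot\overline{\mathit{TM}_{2k}}.$$ (For instance, the Nyldon factorization of $\mathit{TM}_3$ is $a,b,ba,baab$.)
   Context: Strings are over the binary alphabet $\{a,b\}$ ordered by $a \prec b$, and $\prec$ also denotes the induced lexicographic order on strings: $x \prec y$ iff $x$ is a proper prefix of $y$, or there is $i$ with $x[1..i-1]=y[1..i-1]$ and $x[i]\prec y[i]$; $x\preceq y$ means $x\prec y$ or $x=y$. Nyldon words are defined recursively: every string of length $1$ is a Nyldon word; a string $w$ with $|w|\ge 2$ is a Nyldon word iff there is no factorization $w=\gamma_1\cdots\gamma_m$ with $m\ge 2$, each $\gamma_i$ a nonempty Nyldon word, and $\gamma_1\preceq\gamma_2\preceq\cdots\preceq\gamma_m$. Every nonempty string $w$ has a unique factorization $w=\gamma_1\cdots\gamma_m$ into Nyldon words with $\gamma_i\preceq\gamma_{i+1}$ for all $i$; it is called the Nyldon factorization of $w$. For a binary string $w$, $\overline{w}$ is obtained by exchanging $a$ and $b$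 letterwise, and $w'=w[1..|w|-1]$ is $w$ with its last letter removed; $\overline{w}'$ means $(\overline{w})'$. Thue–Morse words: $\mathit{TM}_0=a$ and $\mathit{TM}_k=\mathit{TM}_{k-1}\cdot\overline{\mathit{TM}_{k-1}}$ for $k\ge1$. *)

(* Defs.v *)
From mathcomp Require Import all_boot.
Set Implicit Arguments.
Unset Strict Implicit.
Unset Printing Implicit Defensive.

(* Binary alphabet {a,b} encoded as bool: a := false, b := true, so a < b. *)
Notation letter := bool (only parsing).
Definition la : letter := false.
Definition lb : letter := true.
Notation word := (seq letter).

Definition ltl (c d : letter) : bool := ~~ c && d.

Fixpoint lexle (x y : word) : bool :=
  match x, y with
  | [::], _ => true
  | _ :: _, [::] => false
  | c :: x', d :: y' => ltl c d || ((c == d) && lexle x' y')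
  end.

Fixpoint parts (w : word) : seq (seq word) :=
  match w with
  | [::] => [:: [::]]
  | x :: s =>
      flatten [seq (match p with
                    | [::] => [:: [:: [:: x]]]
                    | y :: p' => [:: [:: x] :: p; (x :: y) :: p']
                    end) | p <- parts s]
  end.

(* Nyldon words, following the recursive definition (recursion on length,
   implemented with a fuel argument that is always >= the length). *)
Fixpoint nyl (n : nat) (w : word) : bool :=
  match n with
  | 0 => false
  | n'.+1 =>
      (size w == 1) ||
      ((1 < size w) &&
       ~~ has (fun p => (1 < size p) && all (nyl n') p && sorted lexle p) (parts w))
  end.

Definition nyldon (w : word) : bool := nyl (size w) w.

(* L is the Nyldon factorization of w: nonempty Nyldon factors, concatenating
   to w, in nondecreasing lexicographic order (unique by the paper's theorem). *)
Definition nyldon_fact (w : word) (L : seq word) : Prop :=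
  [/\ flatten L = w, all nyldon L & sorted lexle L].

Definition compl (w : word) : word := map negb w.
Definition dropLast (w : word) : word := take (size w).-1 w.

Fixpoint TM (k : nat) : word :=
  match k with
  | 0 => [:: la]
  | k'.+1 => TM k' ++ compl (TM k')
  end.

(* Main.v *)
Require Import Defs.
From mathcomp Require Import all_boot zify.
Set Implicit Arguments. Unset Strict Implicit. Unset Printing Implicit Defensive.

Lemma lexle_refl x : lexle x x.
Proof. by elim: x => //= c x ->; rewrite eqxx orbT. Qed.

Lemma lexle_catr x y : lexle x (x ++ y).
Proof. by elim: x => //= c x ->; rewrite eqxx orbT. Qed.

Lemma lexle_catl p x y : lexle (p ++ x) (p ++ y) = lexle x y.
Proof. by elim: p => //= c p ->; rewrite /ltl eqxx; case: c. Qed.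

Lemma lexle_trans y x z : lexle x y -> lexle y z -> lexle x z.
Proof.
elim: x y z => [|c x IH] [|d y] [|e z] //=; rewrite /ltl.
by case: c; case: d; case: e => //=; rewrite ?orbF ?andbT; try apply: IH.
Qed.

Lemma lexle_total x y : lexle x y || lexle y x.
Proof.
elim: x y => [|c x IH] [|d y] //=; rewrite /ltl.
by case: c; case: d => //=; apply: IH.
Qed.

Lemma lexle_anti x y : lexle x y -> lexle y x -> x = y.
Proof.
elim: x y => [|c x IH] [|d y] //=; rewrite /ltl.
by case: c; case: d => //= H1 H2; rewrite (IH y).
Qed.

Lemma nlexle x y : ~~ lexle x y -> lexle y x.
Proof. by move=> H; move: (lexle_total x y); rewrite (negbTE H). Qed.

Lemma nlexle_cat x y s : ~~ lexle x y -> ~~ lexle (x ++ s) y.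
Proof.
elim: x y => [|c x IH] [|d y] //=; rewrite /ltl.
by case: c; case: d => //=; apply: IH.
Qed.

Lemma parts_sound (w : word) p : p \in parts w -> flatten p = w /\ [::] \notin p.
Proof.
elim: w p => [|x s IH] p /=; first by rewrite inE => /eqP ->.
case/flatten_mapP=> q /IH [Hq Hn]; case: q Hq Hn => [|y q'] Hq Hn.
  by rewrite inE => /eqP ->; subst s.
rewrite !inE => /orP [] /eqP ->; subst s => /=; split=> //;
  by move: Hn; rewrite !in_cons !negb_or => /andP [H1 H2]; rewrite ?H1 ?H2.
Qed.

Lemma parts_complete (w : word) (p : seq word) : flatten p = w -> [::] \notin p -> p \in parts w.
Proof.
elim: w p => [|x s IH] [|l p] //=.
- by case: l => // _; rewrite in_cons eqxx.
case: l => [|y l]; first by rewrite in_cons eqxx.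
rewrite /= in_cons negb_or => [[<- Hs]] /andP [_ Hn].
apply/flatten_mapP; case: l Hs => [|z l] Hs /=.
  exists p; first exact: IH.
  by case: p {Hs Hn IH} => [|q p]; rewrite !inE eqxx.
exists ((z :: l) :: p); first by apply: IH => //; rewrite in_cons negb_or Hn.
by rewrite !inE eqxx orbT.
Qed.

Lemma size_part (w : word) (p : seq word) x : flatten p = w -> [::] \notin p -> 1 < size p ->
  x \in p -> size x < size w.
Proof.
move=> <- Hn Hs Hx; move: Hn Hs; case/splitPr: Hx => p1 p2.
rewrite flatten_cat /= !size_cat.
case: p1 => [|y p1] /=.
  case: p2 => [|z p2] //; rewrite !inE !negb_or => /andP [_ /andP [Hz _]] _.
  by rewrite size_cat; case: z Hz => // ? ? _; rewrite /= addnS ltnS leq_addr.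
rewrite !inE !negb_or => /andP [Hy _] _; case: y Hy => // ? ? _.
rewrite /= size_cat /=; lia.
Qed.

Lemma nyl_fuel n m w : size w <= n -> size w <= m -> nyl n w = nyl m w.
Proof.
elim: n m w => [|n IH] [|m] w //=.
- by case: w.
- by case: w.
move=> Hn Hm; congr (_ || (_ && ~~ _)); apply: eq_in_has => p /parts_sound [Hf Hp].
case Hs: (1 < size p) => //=; congr (_ && _); apply: eq_in_all => x Hx.
have := size_part Hf Hp Hs Hx => Hlt; apply: IH.
  by rewrite -ltnS (leq_trans Hlt).
by rewrite -ltnS (leq_trans Hlt).
Qed.

Lemma nyldon_nil : nyldon [::] = false. Proof. by []. Qed.
Lemma nyldon1 c : nyldon [:: c]. Proof. by []. Qed.
Lemma nyldon_ne w : nyldon w -> w <> [::]. Proof. by move=> H E; subst. Qed.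

Lemma nyl_succ n w : nyl n.+1 w = (size w == 1) ||
  ((1 < size w) && ~~ has (fun p => (1 < size p) && all (nyl n) p && sorted lexle p) (parts w)).
Proof. by []. Qed.

Lemma nyldonP w : 1 < size w ->
  nyldon w = ~~ has (fun p => (1 < size p) && all nyldon p && sorted lexle p) (parts w).
Proof.
rewrite /nyldon; case: w => [|x [|y w]] // _.
set w' := [:: x, y & w].
have -> : size w' = (size w').-1.+1 by [].
rewrite nyl_succ.
have -> : (size w' == 1) = false by [].
have -> : (1 < size w') = true by [].
rewrite orFb andTb.
congr (~~ _); apply: eq_in_has => p /parts_sound [Hf Hp].
case Hs: (1 < size p) => //; rewrite !andTb; congr (_ && _); apply: eq_in_all => z Hz.
have := size_part Hf Hp Hs Hz => Hlt; rewrite /nyldon; apply: nyl_fuel => //.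
Qed.

Notation nf := nyldon_fact.

Lemma nf_nil_notin w L : nf w L -> [::] \notin L.
Proof. by case=> _ /allP H _; apply/negP => /H. Qed.

Lemma size_flatten_gt (L : seq word) : [::] \notin L -> 1 < size L -> 1 < size (flatten L).
Proof.
case: L => [|x [|y L]] //; rewrite !inE !negb_or => /and3P [Hx Hy _] _ /=.
by case: x Hx => // ? ? _; case: y Hy => // ? ? _; rewrite /= size_cat /= addnS.
Qed.

Lemma not_nyldon_fact w L : 1 < size L -> nf w L -> ~~ nyldon w.
Proof.
move=> Hs HL; have Hn := nf_nil_notin HL; case: HL => Hf Ha Hso.
have Hw : 1 < size w by rewrite -Hf; apply: size_flatten_gt.
rewrite nyldonP //; apply/negPn/hasP; exists L; first exact: parts_complete.
by rewrite Hs Ha.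
Qed.

Lemma nyldon_split w : 1 < size w -> ~~ nyldon w -> exists L, nf w L /\ 1 < size L.
Proof.
move=> Hw; rewrite nyldonP // negbK => /hasP [p /parts_sound [Hf _]] /andP [/andP [Hs Ha] Hso].
by exists p.
Qed.

Lemma nf_exists w : exists L, nf w L.
Proof.
case Hn: (nyldon w); first by exists [:: w]; split; rewrite /= ?cats0 ?Hn.
case: w Hn => [|x [|y w]] Hn; first by exists [::].
  by rewrite nyldon1 in Hn.
by case: (nyldon_split (w := [:: x, y & w]) erefl (negbT Hn)) => L [? _]; exists L.
Qed.

Lemma nf_nil L : nf [::] L -> L = [::].
Proof.
case: L => // x L /[dup] /nf_nil_notin; rewrite inE negb_or => /andP [Hx _] [/= Hf _ _].
by case: x Hx Hf.
Qed.


Fixpoint chain (P : word) (L : seq word) : bool :=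
  if L is b :: L' then ~~ lexle P b && chain (P ++ b) L' else true.

Lemma chain_cat P L1 L2 : chain P (L1 ++ L2) = chain P L1 && chain (P ++ flatten L1) L2.
Proof.
elim: L1 P => [|b L1 IH] P /=; first by rewrite cats0.
by rewrite IH catA andbA.
Qed.

Lemma cat_eq_split (p s u v : word) : p ++ s = u ++ v -> size p <= size u ->
  exists r, u = p ++ r /\ s = r ++ v.
Proof.
move=> E H; exists (drop (size p) u).
have Hp : p = take (size p) u.
  have := congr1 (take (size p)) E; rewrite take_size_cat // take_cat.
  rewrite leq_eqVlt in H; case/orP: H => [/eqP Hs|Hs].
    by rewrite Hs ltnn subnn take0 cats0 take_size.
  by rewrite Hs.
split; first by rewrite {1}Hp cat_take_drop.
move: E; rewrite -{1}(cat_take_drop (size p) u) -catA -Hp => /eqP.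
by rewrite eqseq_cat // => /andP [_ /eqP].
Qed.

Lemma nf_catl w L1 L2 : nf w (L1 ++ L2) -> nf (flatten L1) L1.
Proof.
case=> _; rewrite all_cat => /andP [H1 _] /cat_sorted2 [S1 _]; by split.
Qed.

Lemma nf_catr w L1 L2 : nf w (L1 ++ L2) -> nf (flatten L2) L2.
Proof.
case=> _; rewrite all_cat => /andP [_ H2] /cat_sorted2 [_ S2]; by split.
Qed.

Lemma sorted_le_last x s : sorted lexle (x :: s) -> lexle x (last x s).
Proof.
rewrite /= path_sortedE; last exact: lexle_trans.
case/andP => H _; case: (lastP s) H => [|s' y] H; first exact: lexle_refl.
by rewrite last_rcons; move/allP: H; apply; rewrite mem_rcons in_cons eqxx.
Qed.

Lemma sorted_rcons_cat D0 dl b L : sorted lexle (rcons D0 dl) -> sorted lexle (b :: L) ->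
  lexle dl b -> sorted lexle (rcons D0 dl ++ L).
Proof.
move=> H1 H2 H3.
case: D0 H1 => [|d D0] H1 /=.
  case: L H2 => [|e L] //= /andP [He HL]; rewrite HL andbT; exact: lexle_trans H3 He.
move: H1 => /= H1; rewrite cat_path H1 /= last_rcons.
by case: L H2 => [|e L] //= /andP [He HL]; rewrite HL andbT; exact: lexle_trans H3 He.
Qed.

Lemma sorted_rcons2 L r v : sorted lexle (rcons (rcons L r) v) = sorted lexle (rcons L r) && lexle r v.
Proof.
case: L => [|x L] /=; first by rewrite andbT.
by rewrite rcons_path last_rcons.
Qed.

Lemma nf_ne_nil w L : nf w L -> w <> [::] -> L <> [::].
Proof. by move=> [<- _ _] H E; subst. Qed.

Lemma flatten_nil_nf L : nf [::] L -> L = [::].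
Proof. exact: nf_nil. Qed.

Definition Uw (w : word) := forall L1 L2, nf w L1 -> nf w L2 -> L1 = L2.
Definition Sw (w : word) := nyldon w -> forall p s, w = p ++ s -> p <> [::] -> nyldon s -> lexle s w.
Definition Lw (w : word) := forall L x p s, nf w (rcons L x) -> w = p ++ s -> nyldon s -> size s <= size x.
Definition Cw (w : word) := forall c y L, w = c :: y -> nf y L -> nyldon w = chain [:: c] L.
Definition AllP w := [/\ Uw w, Sw w, Lw w & Cw w].

Lemma nyldon_nf (w : word) : nyldon w -> nf w [:: w].
Proof. by move=> H; split; rewrite /= ?cats0 ?H. Qed.

Lemma nf_nyldon_all w L x : nf w L -> x \in L -> nyldon x.
Proof. by case=> _ /allP H _ /H. Qed.

Lemma nf_cons_split c y (G : seq word) : nf (c :: y) G -> 1 < size G ->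
  exists z G', [/\ G = (c :: z) :: G', G' <> [::], y = z ++ flatten G' &
     lexle (c :: z) (head [::] G')].
Proof.
move=> HG Hs; have Hn := nf_nil_notin HG; case: HG => Hf Ha Hso.
case: G Hs Hn Hf Ha Hso => [|g [|h G']] //= _; rewrite in_cons negb_or => /andP [Hg _].
case: g Hg => [|c' z] // _ [<- <-] _ /andP [Hle _].
by exists z, (h :: G').
Qed.

Lemma auxR (L : seq word) : forall (P z : word) (G : seq word),
  (forall v, size v <= size (flatten L) -> Uw v /\ Sw v) ->
  nf (flatten L) L -> chain P L -> G <> [::] -> nf (flatten G) G ->
  lexle (P ++ z) (head [::] G) -> z ++ flatten G = flatten L -> False.
Proof.
elim: L => [|b L IH] P z G HUS HL Hc HG HGn Hle E.
  move: E => /= /(congr1 size); rewrite size_cat /= => /eqP; rewrite addn_eq0.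
  by case/andP => _; rewrite size_eq0 => /eqP EG; apply: HG; apply: nf_nil; rewrite -EG.
move: Hc => /= /andP [Hpb Hc].
case: (leqP (size b) (size z)) => Hbz.
  case: (cat_eq_split (esym E) Hbz) => r [Ez Er].
  apply: (IH (P ++ b) r G) => //.
  - move=> v Hv; apply: HUS; rewrite /= size_cat; lia.
  - by apply: (nf_catr (L1 := [:: b])); exact: HL.
  - by rewrite -catA -Ez.
case: (cat_eq_split E (ltnW Hbz)) => r [Eb Er].
have Hb : nyldon b by apply: (nf_nyldon_all HL); rewrite in_cons eqxx.
have Sb : size b <= size (flatten (b :: L)) by rewrite /= size_cat leq_addr.
clear E; case: z Hle Hbz Eb Er => [|c0 z0] Hle Hbz Eb Er.
  have : G = b :: L.
    have EfG : flatten G = flatten (b :: L) by rewrite Er /= Eb.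
    by apply: (proj1 (HUS _ (leqnn _))); [rewrite -EfG; exact: HGn | exact: HL].
  by move=> EG; subst G; move: Hle; rewrite cats0 /= (negbTE Hpb).
set z := c0 :: z0 in Hle Hbz Eb Er.
have rne : r <> [::] by move=> Er0; move: Hbz; rewrite Eb Er0 cats0 ltnn.
case: (nf_exists r) => D HD.
have Dne : D <> [::] by apply: (nf_ne_nil HD).
case: (lastP D) Dne HD => [//|D0 dl] _ HD.
have Hdl : nyldon dl by apply: (nf_nyldon_all HD); rewrite mem_rcons in_cons eqxx.
have Hdlb : lexle dl b.
  apply: (proj2 (HUS _ Sb) Hb (z ++ flatten D0) dl) => //.
  by rewrite Eb; case: HD => <- _ _; rewrite flatten_rcons catA.
have HGD : G = rcons D0 dl ++ L.
  have HsG : size (flatten G) <= size (flatten (b :: L)).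
    rewrite Er; change (flatten (b :: L)) with (b ++ flatten L); rewrite Eb !size_cat.
    by apply: leq_add; [exact: leq_addl | exact: leqnn].
  apply: (proj1 (HUS _ HsG)) => //.
  case: HD HL => HDf HDa HDs [HLf HLa HLs].
  split.
  - by rewrite flatten_cat HDf Er.
  - by rewrite all_cat HDa; move: HLa => /= /andP [].
  - by apply: sorted_rcons_cat HDs HLs Hdlb.
have Hd1 : lexle (head [::] G) dl.
  rewrite HGD; case: D0 HD {HGD} => [|d D0] HD /=; first exact: lexle_refl.
  by case: HD => _ _ /sorted_le_last; rewrite last_rcons.
by move: (nlexle_cat z Hpb); rewrite (lexle_trans Hle (lexle_trans Hd1 Hdlb)).
Qed.

Lemma charR w : (forall v, size v < size w -> AllP v) ->
  forall c y L, w = c :: y -> nf y L -> chain [:: c] L -> nyldon w.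
Proof.
move=> H c y L Ew HL Hc.
case: L HL Hc => [|b L] HL Hc.
  by case: HL => /= Hy _ _; subst; rewrite nyldon1.
have Hy : y <> [::].
  move=> Ey; subst y; have := nf_nil HL; done.
case Hn: (nyldon w) => //; exfalso.
have Hw : 1 < size w by rewrite Ew; case: y Hy {HL Ew} => //.
case: (nyldon_split Hw (negbT Hn)) => G0 [HG0 Hs].
rewrite Ew in HG0; case: (nf_cons_split HG0 Hs) => z [G [EG0 GNe Ey Hle]].
have HGn : nf (flatten G) G by apply: (nf_catr (L1 := [:: c :: z])); rewrite cat1s -EG0; exact: HG0.
have Hf : flatten (b :: L) = y by case: HL.
apply: (auxR (L := b :: L) (P := [:: c]) (z := z) (G := G)); rewrite ?Hf //.
move=> v Hv; have Hlt : size v < size w by rewrite Ew /=; apply: (leq_ltn_trans Hv).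
by case: (H v Hlt).
Qed.

Lemma charL w : (forall v, size v < size w -> AllP v) ->
  forall c y L, w = c :: y -> nf y L -> nyldon w -> chain [:: c] L.
Proof.
move=> H c y L Ew HL Hw.
suff : forall L2 L1, L1 ++ L2 = L -> chain [:: c] L1 -> chain [:: c] L.
  by move/(_ L [::]); apply.
elim=> [|b L2 IH] L1 EL Hc; first by rewrite -EL cats0.
apply: (IH (rcons L1 b)); first by rewrite cat_rcons.
rewrite -cats1 chain_cat Hc /= andbT; apply/negP => Hle.
set P := [:: c] ++ flatten L1.
have HL1 : nf (flatten L1) L1 by apply: (nf_catl (L2 := b :: L2)); rewrite EL; exact: HL.
have HL2 : nf (flatten (b :: L2)) (b :: L2) by apply: (nf_catr (L1 := L1)); rewrite EL; exact: HL.
have Hbne : b <> [::] by apply: nyldon_ne; case: HL2 => _ /andP [].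
have HsP : size P < size w.
  rewrite Ew; case: HL => <- _ _; rewrite -EL flatten_cat /= !size_cat.
  by case: b Hbne {Hle HL2 IH EL} => // ? ? _; rewrite /= ltnS; lia.
have HP : nyldon P.
  case: (H P HsP) => _ _ _ HC; rewrite (HC c (flatten L1) L1) //.
apply: (negP (not_nyldon_fact (w := w) (L := P :: b :: L2) _ _)) => //.
case: HL2 => Hf2 Ha2 Hs2; split.
- rewrite Ew; case: HL => <- _ _; rewrite -EL flatten_cat.
  by change (flatten (P :: b :: L2)) with (P ++ flatten (b :: L2)); rewrite /P -catA.
- by rewrite /= HP.
- by rewrite /= Hle.
Qed.

Lemma sw w : (forall v, size v < size w -> AllP v) -> Cw w -> Sw w.
Proof.
move=> H HC Hw p s E Hp Hs.
case: w Hw E HC H => [//|c y] Hw E HC H.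
case: p Hp E => [//|c' p'] _ [Ec Ey]; subst c'.
case: (nf_exists y) => L HL.
have Sne : s <> [::] by apply: nyldon_ne.
have Yne : y <> [::] by rewrite Ey; case: s Sne {Hs Ey} => //; case: p'.
case: (lastP L) HL => [|L0 bq] HL; first by case: HL => /= Hy; rewrite -Hy in Yne.
have Hsy : size y < size (c :: y) by [].
case: (H y Hsy) => _ _ Ly _.
have Hsb := Ly L0 bq p' s HL Ey Hs.
have Hbq : nyldon bq by apply: (nf_nyldon_all HL); rewrite mem_rcons in_cons eqxx.
have Ey' : p' ++ s = flatten L0 ++ bq by rewrite -Ey; case: HL => <-; rewrite flatten_rcons.
have Hle : size (flatten L0) <= size p'.
  by move: (congr1 size Ey'); rewrite !size_cat; lia.
case: (cat_eq_split (esym Ey') Hle) => r [Ep Ebq].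
have Hch : chain [:: c] (rcons L0 bq) by rewrite -(HC c y) //.
move: Hch; rewrite -cats1 chain_cat => /andP [_ /andP [Hnl _]].
have Hbw : lexle bq (c :: y).
  apply: lexle_trans (nlexle Hnl) _; case: HL => <- _ _.
  by rewrite flatten_rcons -cat_cons lexle_catr.
case: r Ep Ebq => [|x r] Ep Ebq; first by move: Hbw; rewrite Ebq.
have Hsbq : size bq < size (c :: y).
  by case: HL => <- _ _; rewrite flatten_rcons /= size_cat ltnS leq_addl.
case: (H bq Hsbq) => _ Sbq _ _.
apply: (lexle_trans _ Hbw); exact: (Sbq Hbq (x :: r) s Ebq).
Qed.

Lemma auxL (G : seq word) : forall x p s, sorted lexle (rcons G x) -> all nyldon (rcons G x) ->
  (forall g, g \in G -> Sw g) -> flatten (rcons G x) = p ++ s -> nyldon s -> size s <= size x.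
Proof.
elim: G => [|g G IH] x p s Hso Ha HS E Hs.
  by move: E; rewrite /= cats0 => ->; rewrite size_cat leq_addl.
have Hg : nyldon g by move: Ha => /= /andP [->].
move: E; change (flatten (rcons (g :: G) x)) with (g ++ flatten (rcons G x)) => E.
case: (leqP (size g) (size p)) => Hgp.
  case: (cat_eq_split E Hgp) => r [Ep Er].
  apply: (IH x r s _ _ _ Er Hs).
  - by move: Hso => /= /path_sorted.
  - by move: Ha => /= /andP [_ ->].
  - by move=> g' Hg'; apply: HS; rewrite in_cons Hg' orbT.
case: (cat_eq_split (esym E) (ltnW Hgp)) => y0 [Eg Es].
case: p Eg Es Hgp E => [|c p] Eg Es Hgp E.
  have Hnf : nf s (g :: rcons G x) by split => //; rewrite Es Eg.
  have Hs2 : 1 < size (g :: rcons G x) by rewrite /= size_rcons.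
  by move: Hs; rewrite (negbTE (not_nyldon_fact Hs2 Hnf)).
have y0ne : y0 <> [::] by move=> E0; move: Hgp; rewrite Eg E0 cats0 ltnn.
case: (nf_exists y0) => D HD.
case: (lastP D) HD => [|D0 dl] HD; first by case: HD => /= H0; rewrite -H0 in y0ne.
have Hdl : nyldon dl by apply: (nf_nyldon_all HD); rewrite mem_rcons in_cons eqxx.
have Hdlg : lexle dl g.
  apply: (HS g (mem_head _ _) Hg ((c :: p) ++ flatten D0) dl) => //.
  by rewrite Eg; case: HD => <- _ _; rewrite flatten_rcons catA.
have Hnf2 : nf s (rcons D0 dl ++ rcons G x).
  case: HD => HDf HDa HDs; split.
  - by rewrite flatten_cat HDf Es.
  - by rewrite all_cat HDa; move: Ha => /= /andP [].
  - exact: sorted_rcons_cat HDs Hso Hdlg.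
have Hs2 : 1 < size (rcons D0 dl ++ rcons G x) by rewrite size_cat !size_rcons addnS.
by move: Hs; rewrite (negbTE (not_nyldon_fact Hs2 Hnf2)).
Qed.

Lemma lw w : (forall v, size v < size w -> AllP v) -> Lw w.
Proof.
move=> H L x p s [Hf Ha Hso] E Hs.
apply: (auxL (G := L) Hso Ha _ (etrans Hf E) Hs).
move=> g Hg; have Hx : nyldon x by move: Ha; rewrite all_rcons => /andP [->].
have Hx0 : 0 < size x by move: Hx; case: (x).
have : size g < size w.
  rewrite -Hf flatten_rcons size_cat; case/splitPr: Hg => L1 L2.
  rewrite flatten_cat size_cat; change (flatten (g :: L2)) with (g ++ flatten L2).
  rewrite size_cat -addnA addnCA -addnA -{1}(addn0 (size g)) ltn_add2l; lia.
by case/H.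
Qed.

Lemma uw w : (forall v, size v < size w -> AllP v) -> Lw w -> Uw w.
Proof.
move=> H HL L1 L2 H1 H2.
case: w H HL H1 H2 => [|c y] H HLw H1 H2; first by rewrite (nf_nil H1) (nf_nil H2).
case: (lastP L1) H1 => [|A x] H1; first by case: H1.
case: (lastP L2) H2 => [|B z] H2; first by case: H2.
have Hx : nyldon x by apply: (nf_nyldon_all H1); rewrite mem_rcons in_cons eqxx.
have Hz : nyldon z by apply: (nf_nyldon_all H2); rewrite mem_rcons in_cons eqxx.
have E1 : c :: y = flatten A ++ x by case: H1 => <-; rewrite flatten_rcons.
have E2 : c :: y = flatten B ++ z by case: H2 => <-; rewrite flatten_rcons.
have Hzx := HLw A x (flatten B) z H1 E2 Hz.
have Hxz := HLw B z (flatten A) x H2 E1 Hx.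
have Hsz : size (flatten A) = size (flatten B).
  by move: (congr1 size E1) (congr1 size E2); rewrite !size_cat; lia.
move: (E1); rewrite E2 => /eqP; rewrite eqseq_cat // => /andP [/eqP EAB /eqP Exz].
subst z.
have HsA : size (flatten A) < size (c :: y).
  have Hx0 : 0 < size x by move: Hx; case: (x).
  by rewrite E1 size_cat -{1}(addn0 (size (flatten A))) ltn_add2l.
case: (H _ HsA) => UA _ _ _.
rewrite (UA A B) //.
- by apply: (nf_catl (L2 := [:: x])); rewrite cats1; exact: H1.
- by rewrite -EAB; apply: (nf_catl (L2 := [:: x])); rewrite cats1; exact: H2.
Qed.

Theorem allP_all w : AllP w.
Proof.
move: {2}(size w) (leqnn (size w)) => n; elim: n w => [|n IH] w Hw.
  have H : forall v, size v < size w -> AllP v by move=> v Hv; move: (leq_trans Hv Hw).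
  have HC : Cw w.
    move=> c y L Ew HL; apply/idP/idP; [exact: (charL H Ew HL) | exact: (charR H Ew HL)].
  have HLw := lw H; split => //; [exact: uw | exact: sw].
have H : forall v, size v < size w -> AllP v.
  by move=> v Hv; apply: IH; rewrite -ltnS (leq_trans Hv).
have HC : Cw w.
  move=> c y L Ew HL; apply/idP/idP; [exact: (charL H Ew HL) | exact: (charR H Ew HL)].
have HLw := lw H; split => //; [exact: uw | exact: sw].
Qed.

Lemma nf_uniq w L1 L2 : nf w L1 -> nf w L2 -> L1 = L2.
Proof. by case: (allP_all w) => H _ _ _; apply: H. Qed.

Lemma charE c y L : nf y L -> nyldon (c :: y) = chain [:: c] L.
Proof. by case: (allP_all (c :: y)) => _ _ _ H; apply: H. Qed.

Definition Good (u r : word) := nyldon u /\ exists L0, nf (behead u) (rcons L0 r).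

Lemma HL u r v : Good u r -> nyldon v -> ~~ lexle u v -> lexle r v -> Good (u ++ v) v.
Proof.
move=> [Hu [L0 HL0]] Hv Huv Hrv.
case: u Hu HL0 Huv => [//|c y] Hu HL0 Huv /=.
have H2 : nf (y ++ v) (rcons (rcons L0 r) v).
  case: HL0 => Hf Ha Hs; split.
  - by rewrite flatten_rcons Hf.
  - by rewrite all_rcons Hv.
  - by rewrite sorted_rcons2 Hs.
split; last by exists (rcons L0 r).
rewrite -cat_cons (charE _ H2) -cats1 chain_cat -(charE _ HL0) Hu /= andbT.
by case: HL0 => -> _ _.
Qed.

Fixpoint merge (P : word) (L : seq word) : seq word :=
  if L is b :: L' then (if lexle P b then P :: L else merge (P ++ b) L') else [:: P].

Definition alg (w : word) : seq word := foldr (fun c L => merge [:: c] L) [::] w.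

Lemma merge_nf c (L2 : seq word) : forall L1, nf (flatten (L1 ++ L2)) (L1 ++ L2) ->
  chain [:: c] L1 -> nf (c :: flatten (L1 ++ L2)) (merge (c :: flatten L1) L2).
Proof.
elim: L2 => [|b L2 IH] L1 HL Hc.
  rewrite cats0 in HL *; have HP : nyldon (c :: flatten L1) by rewrite (charE _ HL).
  by split; rewrite /= ?cats0 ?HP.
rewrite [merge _ _]/=.
have HL1 : nf (flatten L1) L1 by apply: nf_catl HL.
have HP : nyldon (c :: flatten L1) by rewrite (charE _ HL1).
case: ifP => Hle.
  have HL2 : nf (flatten (b :: L2)) (b :: L2) by apply: nf_catr HL.
  case: HL2 => Hf2 Ha2 Hs2; split.
  - by rewrite flatten_cat.
  - by rewrite /= HP.
  - by rewrite /= Hle.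
have -> : c :: flatten L1 ++ b = c :: flatten (rcons L1 b) by rewrite flatten_rcons.
rewrite -cat_rcons in HL *; apply: IH => //.
by rewrite -cats1 chain_cat Hc /= Hle.
Qed.

Lemma alg_nf w : nf w (alg w).
Proof.
elim: w => [|c w IH] /=; first by split.
have Hf : flatten (alg w) = w by case: IH.
by have := @merge_nf c (alg w) [::]; rewrite cat0s Hf; apply.
Qed.

Lemma alg_nyldon w : alg w = [:: w] -> nyldon w.
Proof. by move=> H; have := alg_nf w; rewrite H => -[_ /andP []]. Qed.

Lemma alg_good w L0 r : alg w = [:: w] -> alg (behead w) = rcons L0 r -> Good w r.
Proof. by move=> H1 H2; split; [exact: alg_nyldon | exists L0; rewrite -H2; exact: alg_nf]. Qed.

Definition T j := TM (2 * j).
Definition C j := compl (T j).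
Definition Cp j := dropLast (C j).

Lemma compl_cat x y : compl (x ++ y) = compl x ++ compl y.
Proof. exact: map_cat. Qed.

Lemma complK x : compl (compl x) = x.
Proof. by rewrite /compl -map_comp map_id_in // => c _ /=; rewrite negbK. Qed.

Lemma T_S j : T j.+1 = T j ++ C j ++ C j ++ T j.
Proof.
rewrite /C /T mulnS /= !compl_cat complK -!catA.
by rewrite -/(TM (2 * j)).
Qed.

Lemma C_S j : C j.+1 = C j ++ T j ++ T j ++ C j.
Proof. by rewrite /C T_S !compl_cat complK. Qed.

Lemma T_last j : exists s, T j = rcons s false.
Proof.
elim: j => [|j [s Hs]]; first by exists [::].
by exists (T j ++ C j ++ C j ++ s); rewrite T_S Hs !rcons_cat.
Qed.

Lemma dropLast_rcons (s : word) x : dropLast (rcons s x) = s.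
Proof. by rewrite /dropLast size_rcons /= -cats1 take_size_cat. Qed.

Lemma C_rcons j : C j = rcons (Cp j) true.
Proof.
case: (T_last j) => s Hs.
have HC : C j = rcons (map negb s) true by rewrite /C Hs /compl map_rcons.
by rewrite /Cp HC dropLast_rcons.
Qed.

Lemma C_cat j : C j = Cp j ++ [:: true].
Proof. by rewrite cats1 C_rcons. Qed.

Lemma Cp_S j : Cp j.+1 = C j ++ T j ++ T j ++ Cp j.
Proof.
apply: (@rcons_injl _ true); rewrite -C_rcons C_S.
by rewrite !rcons_cat -C_rcons.
Qed.

Lemma T_head j : exists s, T j = false :: s.
Proof.
elim: j => [|j [s Hs]]; first by exists [::].
by rewrite T_S Hs; eexists.
Qed.

Lemma C_head j : exists s, C j = true :: s.
Proof. by case: (T_head j) => s Hs; rewrite /C Hs; eexists. Qed.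

Lemma Cp_head j : exists s, Cp j.+1 = true :: s.
Proof. by rewrite Cp_S; case: (C_head j) => s ->; eexists. Qed.

Definition IAt j (a : nat) : word :=
  match a with 0 => T j | 1 => Cp j | _ => [:: true] end.
Definition IA j (A : seq nat) : word := flatten (map (IAt j) A).

Lemma IA_cat j A B : IA j (A ++ B) = IA j A ++ IA j B.
Proof. by rewrite /IA map_cat flatten_cat. Qed.

Lemma IA_cons j a A : IA j (a :: A) = IAt j a ++ IA j A.
Proof. by []. Qed.

Definition expAt (a : nat) : seq nat :=
  match a with 0 => [:: 0; 1; 2; 1; 2; 0] | 1 => [:: 1; 2; 0; 0; 1] | _ => [:: 2] end.
Definition expandA (A : seq nat) : seq nat := flatten (map expAt A).

Lemma IA_expand j A : IA j.+1 A = IA j (expandA A).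
Proof.
elim: A => [|a A IH] //; rewrite IA_cons IH /expandA /= -/(expandA A) IA_cat; congr (_ ++ _).
case: a => [|[|a]] /=.
- by rewrite T_S !C_cat /IA /= !cats0 -!catA.
- by rewrite Cp_S !C_cat /IA /= !cats0 -!catA.
- by [].
Qed.

Definition ex n A := iter n expandA A.

Lemma IA_ex j n A : IA (n + j) A = IA j (ex n A).
Proof. by elim: n A => [|n IH] A //=; rewrite IA_expand IH /ex -iterSr. Qed.

Definition hdl (a : nat) : bool := if a is 0 then false else true.

Fixpoint cmpA (A B : seq nat) : option bool :=
  match A, B with
  | [::], _ => Some true
  | _ :: _, [::] => Some false
  | x :: A', y :: B' =>
      if x == y then cmpA A' B'
      else if hdl x == hdl y then None else Some (~~ hdl x)
  end.

Lemma IAt_head j a : exists s, IAt j.+1 a = hdl a :: s.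
Proof.
case: a => [|[|a]] /=; [exact: T_head | exact: Cp_head | by eexists].
Qed.

Lemma cmpA_ok j A B r : cmpA A B = Some r -> lexle (IA j.+1 A) (IA j.+1 B) = r.
Proof.
elim: A B r => [|x A IH] [|y B] r //=; try by case=> <-.
  by case=> <-; rewrite IA_cons; case: (IAt_head j x) => s ->.
case: eqP => [->|Hxy].
  by move=> H; rewrite !IA_cons lexle_catl; apply: IH.
case: eqP => // Hh [<-]; rewrite !IA_cons.
case: (IAt_head j x) => s ->; case: (IAt_head j y) => s' -> /=.
by move: Hh; rewrite /ltl; case: (hdl x); case: (hdl y).
Qed.

Definition sh (i : nat) : seq nat :=
 match i with
  | 0 => [:: 2; 0; 1; 2; 1; 2; 0; 1; 2; 0; 0; 1; 2; 1; 2; 0; 0; 1; 2; 0; 1; 2; 1; 2; 0]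
  | 1 => [:: 2; 0; 1; 2; 1; 2; 0; 1; 2; 0; 0; 1; 2; 0; 1; 2; 1; 2; 0; 0; 1; 2; 1; 2; 0; 1; 2; 0; 0; 1; 2]
  | 2 => [:: 2; 0; 1; 2; 1; 2; 0; 1; 2; 0; 0; 1; 2; 0; 1; 2; 1; 2; 0; 0; 1; 2; 1; 2; 0; 1; 2; 0; 0; 1; 2; 1; 2; 0; 0; 1; 2; 0; 1; 2; 1; 2; 0; 0; 1; 2; 1; 2; 0; 1; 2; 0; 0; 1]
  | 3 => [:: 2; 0; 1; 2; 1; 2; 0; 1; 2; 0; 0; 1; 2; 1; 2; 0; 0; 1]
  | 4 => [:: 2; 0; 1; 2; 1; 2; 0; 1; 2; 0; 0; 1]
  | 5 => [:: 2; 0; 1; 2; 1; 2; 0; 0; 1; 2; 1; 2; 0; 1; 2; 0; 0; 1; 2]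
  | 6 => [:: 2; 0; 1; 2; 1; 2; 0; 0; 1; 2; 1; 2; 0; 1; 2; 0; 0; 1; 2; 1; 2; 0; 0; 1; 2; 0; 1; 2; 1; 2; 0; 0; 1; 2; 1; 2; 0; 1; 2; 0; 0; 1]
  | 7 => [:: 2; 0; 1; 2; 0; 0; 1]
  | 8 => [:: 2; 0; 1; 2; 1; 2; 0; 0; 1; 2; 1]
  | 9 => [:: 2; 0; 1; 2; 1; 2; 0; 0; 1; 2; 1; 2; 0; 1; 2; 0; 0; 1; 2; 1; 2; 0; 0; 1]
  | _ => [:: 2; 0; 1; 2; 1; 2; 0; 0; 1; 2; 1; 2; 0; 1; 2; 0; 0; 1]
  end.
Definition ru (i : nat) : nat :=
 match i with
  | 0 => 3
  | 1 => 4
  | 2 => 4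
  | 3 => 3
  | 4 => 3
  | 5 => 8
  | 6 => 9
  | 7 => 4
  | 8 => 3
  | 9 => 8
  | _ => 8
  end.
Definition du (i : nat) : nat :=
 match i with
  | 0 => 0
  | 1 => 0
  | 2 => 0
  | 3 => 1
  | 4 => 1
  | 5 => 0
  | 6 => 0
  | 7 => 1
  | 8 => 1
  | 9 => 0
  | _ => 0
  end.
Definition rv (i : nat) : nat :=
 match i with
  | 0 => 0
  | 1 => 5
  | 2 => 6
  | 3 => 2
  | 4 => 7
  | 5 => 1
  | 6 => 10
  | 7 => 10
  | 8 => 9
  | 9 => 2
  | _ => 7
  end.
Definition dv (i : nat) : nat :=
 match i with
  | 0 => 1
  | 1 => 0
  | 2 => 0
  | 3 => 1
  | 4 => 0
  | 5 => 1
  | 6 => 0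
  | 7 => 1
  | 8 => 1
  | 9 => 1
  | _ => 0
  end.

Definition S i j := IA j (sh i).
Definition GoodAt i J := Good (S i J) (S (rv i) (J - dv i)).
Definition atoms x d := ex (2 - d) (sh x).

Definition check i :=
  [&& ex 2 (sh i) == atoms (ru i) (du i) ++ atoms (rv i) (dv i),
      cmpA (atoms (ru i) (du i)) (atoms (rv i) (dv i)) == Some false &
      cmpA (atoms (rv (ru i)) (du i + dv (ru i))) (atoms (rv i) (dv i)) == Some true].

Lemma S_lvl j x d l : d <= 2 -> l + d = j.+3 -> S x l = IA j.+1 (atoms x d).
Proof.
move=> Hd Hl; rewrite /S /atoms -IA_ex; congr IA; lia.
Qed.

Lemma ruleG j i lu lr lv : check i -> lu + du i = j.+3 -> lr + (du i + dv (ru i)) = j.+3 ->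
  lv + dv i = j.+3 -> du i <= 1 -> dv i <= 1 -> dv (ru i) <= 1 ->
  Good (S (ru i) lu) (S (rv (ru i)) lr) -> nyldon (S (rv i) lv) ->
  Good (S i j.+3) (S (rv i) lv).
Proof.
move=> /and3P [/eqP E1 /eqP E2 /eqP E3] H1 H2 H3 B1 B2 B3 Gu Nv.
rewrite (S_lvl (d := du i) _ _ H1) ?(leq_trans B1) // in Gu.
rewrite (S_lvl (d := du i + dv (ru i)) _ _ H2) in Gu; last by lia.
rewrite (S_lvl (d := dv i) _ _ H3) ?(leq_trans B2) // in Nv *.
rewrite (S_lvl (d := 0) _ _ (addn0 _)) //.
have -> : atoms i 0 = ex 2 (sh i) by [].
rewrite E1 IA_cat; apply: HL Gu Nv _ _.
- by rewrite (cmpA_ok j E2).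
- by rewrite (cmpA_ok j E3).
Qed.

Definition goodb (w r : word) :=
  [&& alg w == [:: w], alg (behead w) != [::] & last [::] (alg (behead w)) == r].

Lemma goodb_ok w r : goodb w r -> Good w r.
Proof.
case/and3P => /eqP H1 H2 /eqP H3; split; first exact: alg_nyldon.
case E: (alg (behead w)) H2 H3 => [//|x L] _ H3.
exists (belast x L); rewrite -H3 -lastI -E; exact: alg_nf.
Qed.

Lemma base2 i : i < 11 -> GoodAt i 2.
Proof.
move=> Hi; apply: goodb_ok.
have : all (fun i => goodb (S i 2) (S (rv i) (2 - dv i))) (iota 0 11) by vm_compute.
by move/allP; apply; rewrite mem_iota.
Qed.

Lemma checks i : i < 11 -> check i.
Proof.
move=> Hi; have : all check (iota 0 11) by vm_compute.
by move/allP; apply; rewrite mem_iota.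
Qed.

Ltac app_rule j i Gu Nv :=
  apply: (ruleG (j := j) (i := i) _ _ _ _ _ _ _ Gu Nv);
  [ exact: (checks (i := i) erefl) | rewrite /=; lia | rewrite /=; lia | rewrite /=; lia
  | by [] | by [] | by [] ].

Lemma step j : (forall i, i < 11 -> GoodAt i j.+2) -> forall i, i < 11 -> GoodAt i j.+3.
Proof.
move=> H.
have G3 : GoodAt 3 j.+3 by app_rule j 3 (H 3 erefl) (proj1 (H 2 erefl)).
have G7 : GoodAt 7 j.+3 by app_rule j 7 (H 4 erefl) (proj1 (H 10 erefl)).
have G8 : GoodAt 8 j.+3 by app_rule j 8 (H 3 erefl) (proj1 (H 9 erefl)).
have G4 : GoodAt 4 j.+3 by app_rule j 4 (H 3 erefl) (proj1 G7).
have G9 : GoodAt 9 j.+3 by app_rule j 9 G8 (proj1 (H 2 erefl)).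
have G10 : GoodAt 10 j.+3 by app_rule j 10 G8 (proj1 G7).
have G5 : GoodAt 5 j.+3 by app_rule j 5 G8 (proj1 (H 1 erefl)).
have G6 : GoodAt 6 j.+3 by app_rule j 6 G9 (proj1 G10).
have G0 : GoodAt 0 j.+3 by app_rule j 0 G3 (proj1 (H 0 erefl)).
have G1 : GoodAt 1 j.+3 by app_rule j 1 G4 (proj1 G5).
have G2 : GoodAt 2 j.+3 by app_rule j 2 G4 (proj1 G6).
by case=> [|[|[|[|[|[|[|[|[|[|[|]]]]]]]]]]].
Qed.

Lemma allGood j i : i < 11 -> GoodAt i j.+2.
Proof.
elim: j i => [|j IH] i Hi; first exact: base2.
exact: step.
Qed.

Definition Xf K : word := if K is K'.+1 then S 1 K' else [:: true; false; false; true].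

Lemma IA_one j : IA j [:: 0] = T j.
Proof. by rewrite /IA /= cats0. Qed.

Lemma S0_eq j : S 0 j = true :: T j.+2.
Proof.
have -> : T j.+2 = IA (2 + j) [:: 0] by rewrite IA_one.
by rewrite IA_ex /S.
Qed.

Lemma S1_eq j : S 1 j = true :: T j.+1 ++ C j.+2.
Proof.
have -> : T j.+1 = IA (1 + j) [:: 0] by rewrite IA_one.
have -> : C j.+2 = IA (2 + j) [:: 1; 2] by rewrite C_cat /IA /= ?cats0.
by rewrite !IA_ex -IA_cat /S.
Qed.

Lemma S2_eq j : S 2 j = S 1 j ++ Cp j.+2.
Proof.
have -> : Cp j.+2 = IA (2 + j) [:: 1] by rewrite /IA /= ?cats0.
by rewrite IA_ex /S -IA_cat.
Qed.

Lemma S2_le_S0 j : lexle (S 2 j) (S 0 j).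
Proof.
case: j => [|j]; first by vm_compute.
by apply: cmpA_ok; vm_compute.
Qed.

Lemma nyS i j : i < 11 -> 1 < j -> nyldon (S i j).
Proof.
move=> Hi; case: j => [|[|j]] // _.
by case: (allGood j Hi).
Qed.

Lemma sorted_rcons_trans (L : seq word) X Y : sorted lexle (rcons L X) -> lexle X Y ->
  sorted lexle (rcons L Y).
Proof.
case: (lastP L) => [|L0 l] //; rewrite !sorted_rcons2 => /andP [-> H1] H2 /=.
exact: lexle_trans H1 H2.
Qed.

Lemma core_gen K L X : nf (T K.+1 ++ C K.+1) (rcons L X) ->
  nyldon (X ++ Cp K.+1) -> nyldon (true :: T K.+1) -> nyldon (true :: T K.+1 ++ C K.+2) ->
  lexle (X ++ Cp K.+1) (true :: T K.+1) ->
  nf (T K.+2) (L ++ [:: X ++ Cp K.+1; true :: T K.+1]) /\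
  nf (T K.+2 ++ C K.+2) (L ++ [:: X ++ Cp K.+1; true :: T K.+1 ++ C K.+2]).
Proof.
move=> [Hf Ha Hs] N1 N2 N3 Le.
have EL : forall A B : word, L ++ [:: A; B] = rcons (rcons L A) B.
  by move=> A B; rewrite -!cats1 -catA.
have HfL : flatten L ++ X = T K.+1 ++ C K.+1 by rewrite -flatten_rcons.
have HaL : all nyldon L by move: Ha; rewrite all_rcons => /andP [].
have HsY : sorted lexle (rcons L (X ++ Cp K.+1)).
  by apply: sorted_rcons_trans Hs _; exact: lexle_catr.
split; split.
- rewrite EL !flatten_rcons !catA HfL (T_S K.+1) (C_cat K.+1) -!catA /=.
  by rewrite ?cats0.
- by rewrite EL !all_rcons N1 N2 HaL.
- by rewrite EL sorted_rcons2 HsY Le.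
- rewrite EL !flatten_rcons !catA HfL (T_S K.+1) (C_cat K.+1) -!catA /=.
  by rewrite ?cats0.
- by rewrite EL !all_rcons N1 N3 HaL.
- rewrite EL sorted_rcons2 HsY /=; apply: lexle_trans Le _.
  by rewrite -cat_cons lexle_catr.
Qed.

Lemma core K L : nf (T K.+1 ++ C K.+1) (rcons L (Xf K)) ->
  nf (T K.+2) (L ++ [:: Xf K ++ Cp K.+1; true :: T K.+1]) /\
  nf (T K.+2 ++ C K.+2) (L ++ [:: Xf K ++ Cp K.+1; true :: T K.+1 ++ C K.+2]).
Proof.
move=> H; apply: core_gen H _ _ _ _.
- case: K => [|K]; first by apply: alg_nyldon; vm_compute.
  rewrite [Xf _]/= -S2_eq; case: K => [|[|K]]; try by apply: alg_nyldon; vm_compute.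
  exact: nyS.
- case: K => [|K]; first by apply: alg_nyldon; vm_compute.
  rewrite -S0_eq; case: K => [|[|K]]; try by apply: alg_nyldon; vm_compute.
  exact: nyS.
- rewrite -S1_eq; case: K => [|[|K]]; try by apply: alg_nyldon; vm_compute.
  exact: nyS.
- case: K => [|K]; first by vm_compute.
  by rewrite [Xf _]/= -S2_eq -S0_eq; apply: S2_le_S0.
Qed.

Lemma ex_fact K : exists L, nf (T K.+1 ++ C K.+1) (rcons L (Xf K)).
Proof.
elim: K => [|K [L HL]].
  exists [:: [:: false]; [:: true]; [:: true; false]].
  have -> : rcons [:: [:: false]; [:: true]; [:: true; false]] (Xf 0) = alg (T 1 ++ C 1).
    by vm_compute.
  exact: alg_nf.
exists (rcons L (Xf K ++ Cp K.+1)).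
have [_ H2] := core HL.
have -> : Xf K.+1 = true :: T K.+1 ++ C K.+2 by rewrite -S1_eq.
by rewrite -!cats1 -catA.
Qed.

Unset Implicit Arguments.

Theorem theorem4 (k : nat) (L : seq word) (xc : word) :
  2 <= k ->
  nyldon_fact (TM (2 * k - 1)) (rcons L xc) ->
  nyldon_fact (TM (2 * k))
    (L ++ [:: xc ++ dropLast (compl (TM (2 * k - 2))); lb :: TM (2 * k - 2)]) /\
  nyldon_fact (TM (2 * k + 1))
    (L ++ [:: xc ++ dropLast (compl (TM (2 * k - 2)));
              lb :: TM (2 * k - 2) ++ compl (TM (2 * k))]).
Proof.
case: k => [|[|K]] // _.
have E1 : 2 * K.+2 - 1 = (2 * K.+1).+1 by lia.
have E2 : 2 * K.+2 - 2 = 2 * K.+1 by lia.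
have E3 : 2 * K.+2 + 1 = (2 * K.+2).+1 by lia.
rewrite E1 E2 E3 => H.
have H' : nf (T K.+1 ++ C K.+1) (rcons L xc) by exact: H.
case: (ex_fact K) => L' HL'.
case: (rcons_inj (nf_uniq H' HL')) => EL Ex; subst L' xc.
have [A B] := core HL'.
by split; [exact: A | exact: B].
Qed.
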